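(* Let $G_H$ be a finite undirected multigraph (parallel edges allowed, no self-loops) with vertex set $V$ and edge set partitioned as $E = S \sqcup S^c$ into secure edges $S$ and insecure edges $S^c$, and let $0 < p_J^{S^c} \le p_I$ be real costs. Let $C^*$ be a cut of minimum cardinality among the cuts of $G_H$ containing no secure edges. Then the attack $(C^*, J, I)$ with $I = \{e\}$ for some edge $e \in C^*$ and $J = C^* \setminus\{e\}$ is an optimal hidden jamming attack, for all such costs $p_I$ and $p_J^{S^c}$.
   Context: For a nonempty proper subset $U \subsetneq V$, the cut $\delta(U)$ is the set of edges with exactly one endpoint in $U$; a cut is any set of this form. A jamming attack is a triple $(C,J,I)$ where $C$ is a cut, $J \subseteq C \cap S^c$ is a set of jammed insecure edges, and $I \subseteq (C \cap S^c)\setminus J$ is a nonempty set of insecure edges into which data is injected; its cost is $p_J^{S^c}|J| + p_I|I|$. It is hidden if $I \cup J = C$. An optimal hidden jamming attack is one of minimum cost among all hidden jamming attacks. *)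

(* Defs.v *)
From HB Require Import structures.
From mathcomp Require Import all_boot all_order all_algebra.
Set Implicit Arguments. Unset Strict Implicit. Unset Printing Implicit Defensive.
Import Order.TTheory GRing.Theory Num.Theory.
Local Open Scope ring_scope.

(* A finite multigraph: vertex type V, edge type E (finTypes), each edge e
   has endpoints (ends e).1 and (ends e).2 (parallel edges allowed since
   distinct edges may share endpoints).  No self-loops is a hypothesis. *)

Section Jamming.
Variables (V E : finType) (ends : E -> V * V) (S : {set E}).

Definition cut_of (U : {set V}) : {set E} :=
  [set e | ((ends e).1 \in U) != ((ends e).2 \in U)].

Definition is_cut (C : {set E}) : Prop :=
  exists U : {set V}, [/\ U != set0, U != setT & C = cut_of U].

Definition jamming_attack (C J I : {set E}) : Prop :=
  [/\ is_cut C,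
      J \subset C :&: ~: S,
      I \subset (C :&: ~: S) :\: J
    & I != set0].

Definition hidden (C J I : {set E}) : Prop := I :|: J = C.

Definition hidden_jamming_attack (C J I : {set E}) : Prop :=
  jamming_attack C J I /\ hidden C J I.

Definition attack_cost (R : numDomainType) (pJ pI : R) (J I : {set E}) : R :=
  pJ * #|J|%:R + pI * #|I|%:R.

Definition optimal_hidden_jamming_attack (R : numDomainType) (pJ pI : R)
    (C J I : {set E}) : Prop :=
  hidden_jamming_attack C J I /\
  forall C' J' I' : {set E}, hidden_jamming_attack C' J' I' ->
    attack_cost pJ pI J I <= attack_cost pJ pI J' I'.

Definition min_insecure_cut (C : {set E}) : Prop :=
  [/\ is_cut C, [disjoint C & S]
    & forall C' : {set E}, is_cut C' -> [disjoint C' & S] -> #|C| <= #|C'|]%N.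

End Jamming.

(* Main.v *)
Require Import Defs.
From HB Require Import structures.
From mathcomp Require Import all_boot all_order all_algebra.
From mathcomp Require Import lra.
Import Order.TTheory GRing.Theory Num.Theory.
Local Open Scope ring_scope.

Lemma cost_ineq (R : realFieldType) (pJ pI : R) (c a b : nat) :
  0 < pJ -> pJ <= pI -> (c.+1 <= a + b)%N -> (1 <= a)%N ->
  pJ * c%:R + pI * 1%:R <= pJ * b%:R + pI * a%:R.
Proof.
move=> hJ hJI hc; case: a hc => [//|a] hc _.
have h1 : (c%:R : R) <= a%:R + b%:R by rewrite -natrD ler_nat; rewrite addSn ltnS in hc.
have h2 : pJ * c%:R <= pJ * (a%:R + b%:R) by rewrite ler_wpM2l // ltW.
have h3 : pJ * a%:R <= pI * a%:R by rewrite ler_wpM2r // ler0n.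
have h0 : (0:R) <= a%:R by rewrite ler0n.
rewrite -addn1 natrD; nra.
Qed.

Theorem theorem2 (V E : finType) (ends : E -> V * V)
    (no_loops : forall e : E, (ends e).1 != (ends e).2)
    (S : {set E}) (Cstar : {set E})
    (HC : min_insecure_cut ends S Cstar)
    (e : E) (He : e \in Cstar)
    (R : realFieldType) (pJ pI : R) (HpJ : 0 < pJ) (HpJI : pJ <= pI) :
  optimal_hidden_jamming_attack ends S pJ pI Cstar (Cstar :\ e) [set e].
Proof.
case: HC => cutC disC minC.
have CnS : Cstar \subset ~: S by rewrite -disjoints_subset.
split.
  split; last by rewrite /hidden (setD1K He).
  split => //.
  - rewrite subsetI subD1set /=; exact: subset_trans (subD1set _ _) CnS.
  - rewrite sub1set !inE eqxx /=; rewrite He /=.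
    by move/subsetP: CnS => /(_ e He); rewrite inE.
  - by apply/set0Pn; exists e; rewrite inE.
move=> C' J' I' [[cut' sJ sI ne] hid].
have dIJ : [disjoint I' & J'].
  rewrite disjoints_subset; apply: subset_trans sI _; apply/subsetP=> x; rewrite !inE => /andP[-> _] //.
have C'nS : [disjoint C' & S].
  rewrite -hid disjoints_subset subUset; apply/andP; split.
  - apply: (subset_trans sI); apply/subsetP => x; rewrite !inE => /andP[_ /andP[_ ->]] //.
  - apply: (subset_trans sJ); apply/subsetP => x; rewrite !inE => /andP[_ ->] //.
have hc := minC C' cut' C'nS.
rewrite -hid cardsU (disjoint_setI0 dIJ) cards0 subn0 in hc.
rewrite /attack_cost cards1.
have := cardsD1 e Cstar; rewrite He add1n => hcs.
rewrite hcs in hc.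
apply: cost_ineq; [exact: HpJ | exact: HpJI | exact: hc | by rewrite card_gt0].
Qed.
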